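(* Let $\mathcal O$ be a complete discrete valuation ring with uniformizer $\varpi$ and fraction field $E$. Let $T,\tilde T$ be reduced finite flat local $\mathcal O$-algebras with $\mathcal O$-algebra maps $\lambda:T\to\mathcal O$ and $\tilde\lambda:\tilde T\to\mathcal O$, and corresponding idempotents $e\in T\otimes E$ and $\tilde e\in\tilde T\otimes E$. Let $M_1$ be a $T$-module and $M_2$ a $\tilde T$-module, both finite free over $\mathcal O$. Let $[\,,\,]:M_1\times M_2\to\mathcal O$ be a perfect $\mathcal O$-bilinear pairing (both induced maps $M_1\to\mathrm{Hom}_{\mathcal O}(M_2,\mathcal O)$ and $M_2\to\mathrm{Hom}_{\mathcal O}(M_1,\mathcal O)$ are isomorphisms). Assume that its $E$-bilinear extension satisfies \[[eM_1,(1-\tilde e)M_2]=0\quad\text{and}\quad[(1-e)M_1,\tilde eM_2]=0.\] (a) Then $[\,,\,]$ induces a perfect $\mathcal O$-bilinear pairing $C_0^\lambda(M_1)\times C_0^{\tilde\lambda}(M_2)\to E/\mathcal O$, and $\eta_\lambda(M_1)=\eta_{\tilde\lambda}(M_2)$. (b) If $M_1[\ker\lambda]$ and $M_2[\ker\tilde\lambda]$ are both free of rank $1$ over $\mathcal O$ with bases $\delta_1,\delta_2$, then $\eta_\lambda(M_1)=\eta_{\tilde\lambda}(M_2)=([\delta_1,\delta_2])$.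
   Context: For a reduced finite flat local $\mathcal O$-algebra $T$ with $\lambda:T\to\mathcal O$, there is a canonical decomposition $T\otimes E\cong E\times T^c_E$ whose first projection is $\lambda\otimes E$; $e$ corresponds to $(1,0)$. For a $T$-module $M$ finite free over $\mathcal O$: $C_0^\lambda(M)=eM/(eM\cap M)$ (inside $M\otimes E$), $\eta_\lambda(M)=\mathrm{Fitt}_{\mathcal O}(C_0^\lambda(M))$, and $M[\ker\lambda]=\{m\in M:(\ker\lambda)m=0\}$. *)

(* Defs.v *)
From HB Require Import structures.
From mathcomp Require Import all_boot all_order all_algebra.
Set Implicit Arguments. Unset Strict Implicit. Unset Printing Implicit Defensive.
Import Order.TTheory GRing.Theory Num.Theory.
Local Open Scope ring_scope.

(* The complete DVR O is a
   subring of its fraction field E; a finite free O-module M (resp. finite flat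
   O-algebra T) is modelled as an O-lattice inside V = M (x) E (resp. inside the
   E-algebra A = T (x) E): an O-submodule having an O-basis which is also an
   E-basis of V. *)

Section Defs.
Variable E : fieldType.
Implicit Types (O : E -> Prop).

Definition subring_of O :=
  [/\ O 0, O 1, (forall x y, O x -> O y -> O (x - y)) &
      (forall x y, O x -> O y -> O (x * y))].

Definition is_frac_field O :=
  forall x : E, exists a b, [/\ O a, O b, b != 0 & x = a / b].

Definition unitO O (u : E) := [/\ O u, u != 0 & O u^-1].

Definition dvr_with_unif O (w : E) :=
  [/\ subring_of O, is_frac_field O, O w, w != 0 /\ ~ O w^-1 &
      forall x, O x -> x != 0 -> exists u n, unitO O u /\ x = u * w ^+ n].

Definition wadic_complete O (w : E) :=
  forall a : nat -> E, (forall n, O (a n)) ->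
    (forall n, O ((a n.+1 - a n) / w ^+ n)) ->
    exists x, O x /\ forall n, O ((x - a n) / w ^+ n).

Definition complete_dvr O (w : E) := dvr_with_unif O w /\ wadic_complete O w.

Definition is_lattice O (V : zmodType) (sc : E -> V -> V) (L : V -> Prop) :=
  exists n (b : 'I_n -> V),
    [/\ forall v, exists c : 'I_n -> E, v = \sum_i sc (c i) (b i),
        forall c : 'I_n -> E, \sum_i sc (c i) (b i) = 0 -> forall i, c i = 0 &
        forall c : 'I_n -> E, L (\sum_i sc (c i) (b i)) <-> (forall i, O (c i))].

Definition escale (A : lalgType E) (V : lmodType A) (c : E) (v : V) : V :=
  (c%:A : A) *: v.

Definition red_fflat_local_order O (A : comAlgType E) (T : A -> Prop) :=
  [/\ is_lattice O ( *:%R) T, T 1,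
      (forall x y, T x -> T y -> T (x * y)),
      (forall t k, T t -> t ^+ k.+1 = 0 -> t = 0) &
      (1 : A) != 0 /\ forall t, T t ->
        (exists u, T u /\ t * u = 1) \/ (exists u, T u /\ (1 - t) * u = 1)].

(* lam : A -> E is lambda (x) E for an O-algebra map lambda : T -> O *)
Definition alg_char O (A : comAlgType E) (T : A -> Prop) (lam : {rmorphism A -> E}) :=
  (forall (c : E) (a : A), lam (c *: a) = c * lam a) /\ (forall t, T t -> O (lam t)).

(* e is the idempotent of A corresponding to (1,0) in the decomposition
   A = E x A^c whose first projection is lam *)
Definition lambda_idem (A : comAlgType E) (lam : {rmorphism A -> E}) (e : A) :=
  [/\ e * e = e, lam e = 1 & forall a : A, a * e = lam a *: e].

Definition Tlattice O (A : comAlgType E) (T : A -> Prop) (V : lmodType A)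
    (M : V -> Prop) :=
  is_lattice O (@escale A V) M /\ (forall t m, T t -> M m -> M (t *: m)).

Definition eM (A : comAlgType E) (V : lmodType A) (e : A) (M : V -> Prop) (v : V) :=
  exists m, M m /\ v = e *: m.

(* 0-th Fitting ideal (as a subset of O inside E) of the O-module N / N',
   N' a submodule of N: generators g of N, relation vectors r (with
   \sum r_i g_i in N'), ideal generated by the determinants of n x n matrices
   whose rows are relations. *)
Definition fitting0 O (V : zmodType) (sc : E -> V -> V) (N N' : V -> Prop) (x : E) :=
  exists n (g : 'I_n -> V),
    [/\ (forall i, N (g i)),
        (forall v, N v -> exists c : 'I_n -> E,
            (forall i, O (c i)) /\ v = \sum_i sc (c i) (g i)) &
        exists k (a : 'I_k -> E) (R : 'I_k -> 'M[E]_n),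
          [/\ forall j, O (a j),
              forall j i l, O (R j i l),
              forall j i, N' (\sum_l sc (R j i l) (g l)) &
              x = \sum_j a j * \det (R j)]].

(* C_0^lambda(M) = eM / (eM \cap M) and eta_lambda(M) = Fitt_O(C_0^lambda(M)) *)
Definition eta_lambda O (A : comAlgType E) (V : lmodType A) (e : A) (M : V -> Prop) :=
  fitting0 O (@escale A V) (eM e M) (fun v => eM e M v /\ M v).

Definition Mker (A : comAlgType E) (T : A -> Prop) (lam : {rmorphism A -> E})
    (V : lmodType A) (M : V -> Prop) (m : V) :=
  M m /\ forall t, T t -> lam t = 0 -> t *: m = 0.

Definition free_rank1 O (V : zmodType) (sc : E -> V -> V) (S : V -> Prop) (d : V) :=
  [/\ S d, (forall a, O a -> sc a d = 0 -> a = 0) &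
      forall m, S m -> exists a, O a /\ m = sc a d].

Definition ebilinear (A1 A2 : comAlgType E) (V1 : lmodType A1) (V2 : lmodType A2)
    (pr : V1 -> V2 -> E) :=
  (forall c v v' w, pr (escale c v + v') w = c * pr v w + pr v' w) /\
  (forall c v w w', pr v (escale c w + w') = c * pr v w + pr v w').

Definition perfect_pairing O (A1 A2 : comAlgType E) (V1 : lmodType A1)
    (V2 : lmodType A2) (pr : V1 -> V2 -> E) (M1 : V1 -> Prop) (M2 : V2 -> Prop) :=
  [/\ forall x y, M1 x -> M2 y -> O (pr x y),
      (forall f : V2 -> E,
          (forall a y y', O a -> M2 y -> M2 y' ->
             f (escale a y + y') = a * f y + f y') ->
          (forall y, M2 y -> O (f y)) ->
          exists x, M1 x /\ forall y, M2 y -> f y = pr x y),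
      (forall x, M1 x -> (forall y, M2 y -> pr x y = 0) -> x = 0),
      (forall f : V1 -> E,
          (forall a x x', O a -> M1 x -> M1 x' ->
             f (escale a x + x') = a * f x + f x') ->
          (forall x, M1 x -> O (f x)) ->
          exists y, M2 y /\ forall x, M1 x -> f x = pr x y) &
      (forall y, M2 y -> (forall x, M1 x -> pr x y = 0) -> y = 0)].

(* pr induces a well-defined perfect pairing
   (N1 / (N1 \cap L1)) x (N2 / (N2 \cap L2)) -> E/O, i.e. the maps into
   Hom_O(-, E/O) are well defined, injective and surjective.  Homomorphisms
   N2/(N2 \cap L2) -> E/O are represented by lifts f : N2 -> E. *)
Definition induced_perfect_EmodO O (A1 A2 : comAlgType E) (V1 : lmodType A1)
    (V2 : lmodType A2) (pr : V1 -> V2 -> E)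
    (N1 L1 : V1 -> Prop) (N2 L2 : V2 -> Prop) :=
  [/\
      (forall x y, N1 x -> L1 x -> N2 y -> O (pr x y)),
      (forall x y, N1 x -> N2 y -> L2 y -> O (pr x y)),
      (forall x, N1 x -> (forall y, N2 y -> O (pr x y)) -> L1 x),
      (forall y, N2 y -> (forall x, N1 x -> O (pr x y)) -> L2 y) &
      (forall f : V2 -> E,
          (forall a y y', O a -> N2 y -> N2 y' ->
             O (f (escale a y + y') - (a * f y + f y'))) ->
          (forall y, N2 y -> L2 y -> O (f y)) ->
          exists x, N1 x /\ forall y, N2 y -> O (f y - pr x y)) /\
      (forall f : V1 -> E,
          (forall a x x', O a -> N1 x -> N1 x' ->
             O (f (escale a x + x') - (a * f x + f x'))) ->
          (forall x, N1 x -> L1 x -> O (f x)) ->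
          exists y, N2 y /\ forall x, N1 x -> O (f x - pr x y))].

End Defs.

(* Main.v *)
Require Import Defs.
From HB Require Import structures.
From mathcomp Require Import all_boot all_order all_algebra.
From mathcomp Require Import ring all_fingroup.
From Stdlib Require Import ClassicalEpsilon.
Set Implicit Arguments. Unset Strict Implicit. Unset Printing Implicit Defensive.
Import Order.TTheory GRing.Theory Num.Theory.
Local Open Scope ring_scope.


Section Ostuff.
Variables (E : fieldType) (O : E -> Prop).
Hypothesis sO : subring_of O.
Hypothesis vO : forall x : E, x != 0 -> O x \/ O x^-1.

Lemma O0 : O 0. Proof. by case: sO. Qed.
Lemma O1 : O 1. Proof. by case: sO. Qed.
Lemma OB x y : O x -> O y -> O (x - y). Proof. by case: sO => _ _ H _; apply: H. Qed.
Lemma OM x y : O x -> O y -> O (x * y). Proof. by case: sO => _ _ _ H; apply: H. Qed.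
Lemma ON x : O x -> O (- x).
Proof. by move=> h; rewrite -sub0r; apply: OB=> //; apply O0. Qed.
Lemma OD x y : O x -> O y -> O (x + y).
Proof. move=> hx hy; rewrite -(opprK y); apply: OB=>//; exact: ON. Qed.
Lemma Osum (I : Type) (r : seq I) (P : pred I) (F : I -> E) :
  (forall i, P i -> O (F i)) -> O (\sum_(i <- r | P i) F i).
Proof. move=> h; apply: (big_ind O) => //; [exact: O0 | exact: OD]. Qed.
Lemma Oprod (I : Type) (r : seq I) (P : pred I) (F : I -> E) :
  (forall i, P i -> O (F i)) -> O (\prod_(i <- r | P i) F i).
Proof. move=> h; apply: (big_ind O) => //; [exact: O1 | exact: OM]. Qed.
Lemma Osign (b : bool) : O ((-1) ^+ b).
Proof. case: b; rewrite ?expr1 ?expr0; [apply: ON; exact O1| exact O1]. Qed.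
Lemma Onat k : O k%:R.
Proof. elim: k => [|k IH]; first exact: O0. by rewrite -addn1 natrD; apply: OD => //; exact: O1. Qed.

Definition Omx m n (A : 'M[E]_(m, n)) := forall i j, O (A i j).

Lemma Odet n (A : 'M[E]_n) : Omx A -> O (\det A).
Proof.
move=> h; rewrite /determinant; apply: Osum => s _; apply: OM; first exact: Osign.
by apply: Oprod => i _; apply: h.
Qed.

Lemma Omx_mul m n p (A : 'M[E]_(m, n)) (B : 'M[E]_(n, p)) : Omx A -> Omx B -> Omx (A *m B).
Proof. by move=> hA hB i j; rewrite mxE; apply: Osum => k _; apply: OM. Qed.
Lemma Omx_add m n (A B : 'M[E]_(m, n)) : Omx A -> Omx B -> Omx (A + B).
Proof. by move=> hA hB i j; rewrite mxE; apply: OD. Qed.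
Lemma Omx_opp m n (A : 'M[E]_(m, n)) : Omx A -> Omx (- A).
Proof. by move=> hA i j; rewrite mxE; apply: ON. Qed.
Lemma Omx_sub m n (A B : 'M[E]_(m, n)) : Omx A -> Omx B -> Omx (A - B).
Proof. by move=> hA hB; apply: Omx_add => //; apply: Omx_opp. Qed.
Lemma Omx_scale m n a (A : 'M[E]_(m, n)) : O a -> Omx A -> Omx (a *: A).
Proof. by move=> ha hA i j; rewrite mxE; apply: OM. Qed.
Lemma Omx0 m n : Omx (0 : 'M[E]_(m, n)).
Proof. by move=> i j; rewrite mxE; exact: O0. Qed.
Lemma Omx_scalar n a : O a -> Omx (a%:M : 'M[E]_n).
Proof. by move=> ha i j; rewrite mxE; case: (i == j) => /=; [rewrite mulr1n | rewrite mulr0n; exact: O0]. Qed.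
Lemma Omx1 n : Omx (1%:M : 'M[E]_n).
Proof. exact: Omx_scalar O1. Qed.
Lemma Omx_tr m n (A : 'M[E]_(m, n)) : Omx A -> Omx A^T.
Proof. by move=> h i j; rewrite mxE. Qed.
Lemma Omx_perm n (s : {perm 'I_n}) : Omx (perm_mx s : 'M[E]_n).
Proof. by rewrite perm_mxEsub => i j; rewrite mxE; apply: Omx1. Qed.
Lemma Omx_block m1 m2 n1 n2 (A : 'M[E]_(m1, n1)) B C (D : 'M[E]_(m2, n2)) :
  Omx A -> Omx B -> Omx C -> Omx D -> Omx (block_mx A B C D).
Proof.
move=> hA hB hC hD i j; rewrite -(splitK i) -(splitK j).
case: (split i) => i'; case: (split j) => j' /=.
- by rewrite block_mxEul.
- by rewrite block_mxEur.
- by rewrite block_mxEdl.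
- by rewrite block_mxEdr.
Qed.
Lemma Omx_adj n (A : 'M[E]_n) : Omx A -> Omx (\adj A).
Proof.
move=> h i j; rewrite mxE /cofactor; apply: OM; first by rewrite -signr_odd; exact: Osign.
by apply: Odet => k l; rewrite !mxE.
Qed.

Definition Ounit n (U : 'M[E]_n) :=
  Omx U /\ exists U', [/\ Omx U', U *m U' = 1%:M & U' *m U = 1%:M].

Lemma Ounit1 n : Ounit (1%:M : 'M[E]_n).
Proof. split; first exact: Omx1. by exists 1%:M; rewrite mulmx1; split => //; exact: Omx1. Qed.

Lemma Ounit_mul n (U V : 'M[E]_n) : Ounit U -> Ounit V -> Ounit (U *m V).
Proof.
move=> [hU [U' [hU' e1 e2]]] [hV [V' [hV' f1 f2]]]; split; first exact: Omx_mul.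
exists (V' *m U'); split; first exact: Omx_mul.
- by rewrite mulmxA -(mulmxA U) f1 mulmx1 e1.
- by rewrite mulmxA -(mulmxA V') e2 mulmx1 f2.
Qed.

Lemma Ounit_tr n (U : 'M[E]_n) : Ounit U -> Ounit U^T.
Proof.
move=> [hU [U' [hU' e1 e2]]]; split; first exact: Omx_tr.
exists U'^T; split; first exact: Omx_tr.
- by rewrite -trmx_mul e2 trmx1.
- by rewrite -trmx_mul e1 trmx1.
Qed.

Lemma Ounit_perm n (s : {perm 'I_n}) : Ounit (perm_mx s : 'M[E]_n).
Proof.
split; first exact: Omx_perm.
exists (perm_mx s^-1); split; first exact: Omx_perm.
- by rewrite -perm_mxM mulgV perm_mx1.
- by rewrite -perm_mxM mulVg perm_mx1.
Qed.

Lemma min_seq (s : seq E) : all (fun x => x != 0) s -> s != [::] ->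
  exists2 m, m \in s & forall x, x \in s -> O (x / m).
Proof.
elim: s => [|x s IH] //= /andP[x0 s0] _.
case: (eqVneq s [::]) => [->|sn].
  exists x; first by rewrite inE eqxx.
  by move=> y; rewrite inE => /eqP->; rewrite divff //; exact O1.
have [m ms hm] := IH s0 sn.
have m0 : m != 0 by move/allP: s0; apply.
have xm0 : x / m != 0 by rewrite mulf_neq0 ?invr_eq0.
case: (vO xm0) => h.
  exists m; first by rewrite inE ms orbT.
  by move=> y; rewrite inE => /orP[/eqP->//|]; apply: hm.
exists x; first by rewrite inE eqxx.
move=> y; rewrite inE => /orP[/eqP->|ys]; first by rewrite divff //; exact O1.
rewrite invf_div in h.
have -> : y / x = (y / m) * (m / x) by rewrite mulrA divfK.
by apply: OM => //; apply: hm.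
Qed.

Lemma min_fin (T : finType) (F : T -> E) : (exists t, F t != 0) ->
  exists t, F t != 0 /\ forall u, O (F u / F t).
Proof.
move=> [t0 ht0].
pose s := [seq F t | t <- enum T & F t != 0].
have s0 : all (fun x => x != 0) s.
  by apply/allP => x /mapP[t]; rewrite mem_filter => /andP[h _] ->.
have sn : s != [::].
  have : F t0 \in s by apply: map_f; rewrite mem_filter ht0 mem_enum.
  by case: (s).
have [m /mapP[t]] := min_seq s0 sn.
rewrite mem_filter => /andP[ht _] -> hm; exists t; split => // u.
case: (eqVneq (F u) 0) => [->|hu]; first by rewrite mul0r; exact O0.
by apply: hm; apply: map_f; rewrite mem_filter hu mem_enum.
Qed.

Lemma scale_in (T : finType) (F : T -> E) : exists c, c != 0 /\ forall t, O (c * F t).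
Proof.
case: (boolP [exists t, F t != 0]) => [/existsP ex|].
  have [t [ht hm]] := min_fin ex.
  case: (vO ht) => h.
    exists 1; split; first exact: oner_neq0.
    by move=> u; rewrite mul1r -(divfK ht (F u)); apply: OM.
  exists (F t)^-1; split; first by rewrite invr_eq0.
  by move=> u; rewrite mulrC.
rewrite negb_exists => /forallP h; exists 1; split; first exact: oner_neq0.
by move=> u; move: (h u); rewrite negbK => /eqP->; rewrite mulr0; exact O0.
Qed.


Definition diagm n (D : 'M[E]_n) := forall i j, i != j -> D i j = 0.

Lemma diagm_tr n (D : 'M[E]_n) : diagm D -> D^T = D.
Proof.
move=> h; apply/matrixP => i j; rewrite mxE.
case: (eqVneq i j) => [->//|ne]; rewrite !h //; by rewrite eq_sym.
Qed.

Lemma smith n (Q : 'M[E]_n) :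
  exists U D V, [/\ Ounit U, Ounit V, diagm D & Q = U *m D *m V].
Proof.
elim: n Q => [|n IH] Q.
  exists 1%:M, Q, 1%:M; split; try exact: Ounit1; first by move=> [].
  by rewrite mul1mx mulmx1.
case: (eqVneq Q 0) => [->|Qn0].
  exists 1%:M, 0, 1%:M; split; try exact: Ounit1; first by move=> i j _; rewrite mxE.
  by rewrite mulmx0 mul0mx.
have [[i0 j0] [hp hmin]] : exists t : 'I_n.+1 * 'I_n.+1, Q t.1 t.2 != 0 /\
    forall u : 'I_n.+1 * 'I_n.+1, O (Q u.1 u.2 / Q t.1 t.2).
  have H := @min_fin _ (fun t : 'I_n.+1 * 'I_n.+1 => Q t.1 t.2); apply: H.
  case: (boolP [exists t : 'I_n.+1 * 'I_n.+1, Q t.1 t.2 != 0]) => [/existsP//|].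
  rewrite negb_exists => /forallP h; case/eqP: Qn0; apply/matrixP => i j.
  by rewrite mxE; move: (h (i, j)); rewrite negbK => /eqP.
simpl in hp, hmin.
pose P1 : 'M[E]_n.+1 := tperm_mx 0 i0.
pose P2 : 'M[E]_n.+1 := tperm_mx 0 j0.
have [Q1 eQ1d] : exists Q1 : 'M[E]_(1 + n), Q1 = P1 *m Q *m P2 by eexists.
have eQ1 : forall k l, Q1 k l = Q (tperm 0 i0 k) (tperm 0 j0 l).
  by move=> k l; rewrite eQ1d /P1 /P2 -xrowE -xcolE /xcol /xrow /col_perm /row_perm !mxE.
have hP1 : P1 *m P1 = 1%:M by rewrite /P1 /tperm_mx -perm_mxM tperm2 perm_mx1.
have hP2 : P2 *m P2 = 1%:M by rewrite /P2 /tperm_mx -perm_mxM tperm2 perm_mx1.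
have eQ : Q = P1 *m Q1 *m P2.
  by rewrite eQ1d !mulmxA hP1 mul1mx -mulmxA hP2 mulmx1.
pose a := Q i0 j0.
have l0 : lshift n (0 : 'I_1) = 0 :> 'I_(1 + n) by apply: val_inj.
have hmin1 : forall k l, O (Q1 k l / a) by move=> k l; rewrite eQ1; apply: (hmin (_, _)).
pose r := ursubmx (Q1 : 'M_(1 + n, 1 + n)).
pose c := dlsubmx (Q1 : 'M_(1 + n, 1 + n)).
pose S := drsubmx (Q1 : 'M_(1 + n, 1 + n)).
have ul : ulsubmx (Q1 : 'M_(1 + n, 1 + n)) = a%:M.
  rewrite (mx11_scalar (ulsubmx _)) [ulsubmx _ 0 0]mxE [usubmx _ _ _]mxE l0 eQ1 !tpermL //.
have dQ1 : Q1 = block_mx a%:M r c S by rewrite -ul submxK.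
pose x := a^-1 *: c.
pose y := a^-1 *: r.
have Ox : Omx x.
  by move=> k l; rewrite !mxE mulrC; apply: hmin1.
have Oy : Omx y.
  by move=> k l; rewrite !mxE mulrC; apply: hmin1.
pose S' := S - x *m r.
have [U1 [D1 [V1 [hU1 hV1 hD1 eS']]]] := IH S'.
pose L' : 'M[E]_(1 + n) := block_mx 1%:M 0 x 1%:M.
pose R' : 'M[E]_(1 + n) := block_mx 1%:M y 0 1%:M.
have ha : a != 0 by [].
have UL : Ounit L'.
  split; first by apply: Omx_block => //; [exact: Omx1 | exact: Omx0 | exact: Omx1].
  exists (block_mx 1%:M 0 (- x) 1%:M); split.
  - by apply: Omx_block; [exact: Omx1 | exact: Omx0 | exact: Omx_opp | exact: Omx1].
  - rewrite mulmx_block !mul1mx !mulmx1 !mul0mx !mulmx0 !addr0 !add0r.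
    rewrite (_ : x - x = 0); last by apply/matrixP => k l; rewrite !mxE subrr.
    by rewrite -scalar_mx_block.
  - rewrite mulmx_block !mul1mx !mulmx1 !mul0mx !mulmx0 !addr0 !add0r.
    rewrite (_ : - x + x = 0); last by apply/matrixP => k l; rewrite !mxE addNr.
    by rewrite -scalar_mx_block.
have UR : Ounit R'.
  split; first by apply: Omx_block => //; [exact: Omx1 | exact: Omx0 | exact: Omx1].
  exists (block_mx 1%:M (- y) 0 1%:M); split.
  - by apply: Omx_block; [exact: Omx1 | exact: Omx_opp | exact: Omx0 | exact: Omx1].
  - rewrite mulmx_block !mul1mx !mulmx1 !mul0mx !mulmx0 !addr0 !add0r.
    rewrite (_ : - y + y = 0); last by apply/matrixP => k l; rewrite !mxE addNr.
    by rewrite -scalar_mx_block.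
  - rewrite mulmx_block !mul1mx !mulmx1 !mul0mx !mulmx0 !addr0 !add0r.
    rewrite (_ : y - y = 0); last by apply/matrixP => k l; rewrite !mxE subrr.
    by rewrite -scalar_mx_block.
have Ublk : forall U : 'M[E]_n, Ounit U -> Ounit (block_mx (1%:M : 'M_1) 0 0 U).
  move=> U [hU [U' [hU' f1 f2]]]; split.
    by apply: Omx_block => //; [exact: Omx1 | exact: Omx0 | exact: Omx0].
  exists (block_mx 1%:M 0 0 U'); split.
  - by apply: Omx_block => //; [exact: Omx1 | exact: Omx0 | exact: Omx0].
  - by rewrite mulmx_block !mul1mx !mulmx1 !mul0mx !mulmx0 !addr0 !add0r f1 -scalar_mx_block.
  - by rewrite mulmx_block !mul1mx !mulmx1 !mul0mx !mulmx0 !addr0 !add0r f2 -scalar_mx_block.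
have eQ1' : Q1 = L' *m block_mx a%:M 0 0 S' *m R'.
  rewrite dQ1 /L' /R' !mulmx_block !mul1mx !mulmx1 !mul0mx !mulmx0 !addr0 !add0r.
  rewrite mul_scalar_mx mul_mx_scalar /x /y scalerA mulfV // scale1r.
  rewrite scalerA mulfV // scale1r /S' /x -scalemxAl -scalemxAr.
  by rewrite addrC subrK.
have eblk : block_mx a%:M 0 0 S' =
    block_mx (1%:M : 'M_1) 0 0 U1 *m block_mx a%:M 0 0 D1 *m block_mx 1%:M 0 0 V1.
  rewrite eS' !mulmx_block !mul1mx !mulmx1 !mul0mx !mulmx0 !addr0 !add0r.
  by rewrite mul0mx.
exists (P1 *m L' *m (block_mx (1%:M : 'M_1) 0 0 U1 : 'M_(1 + n))),
  (block_mx (a%:M : 'M_1) 0 0 D1 : 'M_(1 + n)),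
  ((block_mx (1%:M : 'M_1) 0 0 V1 : 'M_(1 + n)) *m R' *m P2); split.
- by apply: Ounit_mul; [apply: Ounit_mul => //; exact: Ounit_perm | exact: Ublk].
- by apply: Ounit_mul; [apply: Ounit_mul => //; exact: Ublk | exact: Ounit_perm].
- move=> i j; rewrite -[i](@splitK 1 n) -[j](@splitK 1 n).
  case: (split _) => i'; case: (split _) => j' /= hne.
  all: rewrite ?block_mxEul ?block_mxEur ?block_mxEdl ?block_mxEdr.
  + by move: hne; rewrite !ord1 eqxx.
  + by rewrite (@block_mxEur _ 1 n 1 n) mxE.
  + by rewrite (@block_mxEdl _ 1 n 1 n) mxE.
  + rewrite (@block_mxEdr _ 1 n 1 n); apply: hD1; apply: contraNneq hne => ->; exact: eqxx.
- by rewrite eQ eQ1' eblk !mulmxA.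
Qed.

End Ostuff.


Section Mx.
Variables (E : fieldType) (O : E -> Prop).
Hypothesis sO : subring_of O.
Hypothesis vO : forall x : E, x != 0 -> O x \/ O x^-1.
Local Notation O0 := (O0 sO).
Local Notation O1 := (O1 sO).
Local Notation OB := (OB sO).
Local Notation OM := (OM sO).
Local Notation ON := (ON sO).
Local Notation OD := (OD sO).
Local Notation Osum := (Osum sO).
Local Notation Omx := (Omx O).
Local Notation Ounit := (Ounit O).
Local Notation Omx_mul := (Omx_mul sO).
Local Notation Omx_tr := (@Omx_tr _ O).
Local Notation Omx_add := (Omx_add sO).
Local Notation Omx_sub := (Omx_sub sO).
Local Notation Omx_scale := (Omx_scale sO).
Local Notation Omx0 := (Omx0 sO).
Local Notation diagm := (@diagm E).

Definition dot n (x y : 'rV[E]_n) := \sum_i x 0 i * y 0 i.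
Definition NQ n (Q : 'M[E]_n) (v : 'rV_n) := exists z, Omx z /\ v = z *m Q.
Definition NQ' n (Q : 'M[E]_n) (v : 'rV_n) := NQ Q v /\ Omx v.
Definition FQ n (Q : 'M[E]_n) x := fitting0 O ( *:%R) (NQ Q) (NQ' Q) x.

Lemma dot_mx n (x y : 'rV[E]_n) : dot x y = (x *m y^T) 0 0.
Proof. by rewrite mxE; apply: eq_bigr => i _; rewrite mxE. Qed.
Lemma dotC n (x y : 'rV[E]_n) : dot x y = dot y x.
Proof. by apply: eq_bigr => i _; rewrite mulrC. Qed.
Lemma dot_mulmx n (x y : 'rV[E]_n) A : dot (x *m A) y = dot x (y *m A^T).
Proof. by rewrite !dot_mx trmx_mul trmxK mulmxA. Qed.
Lemma Odot n (x y : 'rV[E]_n) : Omx x -> Omx y -> O (dot x y).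
Proof. by move=> hx hy; apply: Osum => i _; apply: OM. Qed.
Lemma dotBr n (x y z : 'rV[E]_n) : dot x (y - z) = dot x y - dot x z.
Proof. by rewrite /dot -sumrB; apply: eq_bigr => i _; rewrite !mxE mulrBr. Qed.
Lemma dot_delta n (x : 'rV[E]_n) j : dot x (delta_mx 0 j) = x 0 j.
Proof.
rewrite /dot (bigD1 j) //= big1 ?addr0; first by rewrite mxE !eqxx mulr1.
by move=> i hi; rewrite mxE (negbTE hi) andbF mulr0.
Qed.
Lemma dotZl n (x y : 'rV[E]_n) a : dot (a *: x) y = a * dot x y.
Proof. by rewrite /dot mulr_sumr; apply: eq_bigr => i _; rewrite mxE mulrA. Qed.

Lemma Omx_delta n (j : 'I_n) : Omx (delta_mx 0 j : 'rV[E]_n).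
Proof. by move=> a b; rewrite mxE; case: (_ && _); [exact: O1 | exact: O0]. Qed.

Lemma fit_iso (V V' : zmodType) (sc : E -> V -> V) (sc' : E -> V' -> V')
  (phi : V -> V') (N N' : V -> Prop) (N2 N2' : V' -> Prop) :
  (forall x y, phi (x + y) = phi x + phi y) ->
  (forall c x, phi (sc c x) = sc' c (phi x)) -> injective phi ->
  (forall v', N2 v' -> exists v, v' = phi v) ->
  (forall v, N v <-> N2 (phi v)) -> (forall v, N' v <-> N2' (phi v)) ->
  forall x, fitting0 O sc N N' x <-> fitting0 O sc' N2 N2' x.
Proof.
move=> phiD phiZ phiI sur hN hN' x.
have phi0 : phi 0 = 0.
  have h := phiD 0 0; rewrite addr0 in h.
  by apply: (addrI (phi 0)); rewrite -h addr0.
have phiS : forall k (c : 'I_k -> E) g,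
    phi (\sum_i sc (c i) (g i)) = \sum_i sc' (c i) (phi (g i)).
  move=> k c g; rewrite (big_morph phi phiD phi0); apply: eq_bigr => i _; exact: phiZ.
split.
- case=> k [g [gN gen [m [a [R [aO RO rel ->]]]]]].
  exists k, (phi \o g); split.
  + by move=> i; apply/hN.
  + move=> v' h2; have [v ev] := sur _ h2; subst v'.
    have [c [cO ev']] := gen v (proj2 (hN v) h2).
    by exists c; split => //; rewrite ev' phiS.
  + exists m, a, R; split => // j i; rewrite /= -phiS; apply/hN'; exact: rel.
- case=> k [g' [gN gen [m [a [R [aO RO rel ->]]]]]].
  have [g hg] : exists g : 'I_k -> V, forall i, g' i = phi (g i).
    apply: (@fin_all_exists _ (fun _ => V) (fun i v => g' i = phi v)) => i.
    by have [v ->] := sur _ (gN i); exists v.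
  exists k, g; split.
  + by move=> i; apply/hN; rewrite -hg.
  + move=> v hv; have [c [cO ev]] := gen _ (proj1 (hN v) hv).
    exists c; split => //; apply: phiI; rewrite ev phiS.
    by apply: eq_bigr => i _; rewrite hg.
  + exists m, a, R; split => // j i; apply/hN'; rewrite phiS.
    have := rel j i; congr N2'; apply: eq_bigr => l _; by rewrite hg.
Qed.

Lemma FQ_U n (U Q : 'M[E]_n) x : Ounit U -> FQ (U *m Q) x <-> FQ Q x.
Proof.
move=> [hU [U' [hU' e1 e2]]].
have hN : forall v, NQ (U *m Q) v <-> NQ Q v.
  move=> v; split.
    by move=> [z [hz ->]]; exists (z *m U); split; [exact: Omx_mul | rewrite mulmxA].
  move=> [z [hz ->]]; exists (z *m U'); split; first exact: Omx_mul.
  by rewrite mulmxA -(mulmxA z) e2 mulmx1.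
apply: (@fit_iso _ _ _ _ id) => //.
- by move=> v' _; exists v'.
- by move=> v; rewrite /NQ'; split => -[h1 h2]; split => //; apply/hN.
Qed.

Lemma FQ_V n (V Q : 'M[E]_n) x : Ounit V -> FQ Q x <-> FQ (Q *m V) x.
Proof.
move=> [hV [V' [hV' e1 e2]]].
have inj : injective (fun v : 'rV[E]_n => v *m V).
  by move=> a b /= h; rewrite -(mulmx1 a) -(mulmx1 b) -e1 !mulmxA h.
have hN : forall v, NQ Q v <-> NQ (Q *m V) (v *m V).
  move=> v; split.
    by move=> [z [hz ->]]; exists z; split => //; rewrite mulmxA.
  move=> [z [hz h]]; exists z; split => //; apply: inj; by rewrite /= h mulmxA.
apply: (@fit_iso _ _ _ _ (fun v => v *m V)) => //.
- by move=> a b; rewrite mulmxDl.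
- by move=> c a; rewrite scalemxAl.
- by move=> v' [z [hz ->]]; exists (z *m Q); rewrite mulmxA.
- move=> v; rewrite /NQ'; split => -[h1 h2]; split; try by apply/hN.
    exact: Omx_mul.
  by rewrite -(mulmx1 v) -e1 mulmxA; exact: Omx_mul.
Qed.

Lemma FQ_tr n (Q : 'M[E]_n) x : FQ Q x <-> FQ Q^T x.
Proof.
have [U [D [V [hU hV hD ->]]]] := smith sO vO Q.
rewrite !trmx_mul (diagm_tr hD) -mulmxA.
rewrite FQ_U // -FQ_V // FQ_U; last exact: Ounit_tr.
by rewrite -FQ_V //; exact: Ounit_tr.
Qed.


Lemma cl1 n (Q : 'M[E]_n) x y : Q *m Q = Q -> NQ Q x -> Omx x -> NQ Q^T y -> O (dot x y).
Proof.
move=> idQ [z [hz ex]] hx [z' [hz' ->]].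
rewrite -dot_mulmx ex -mulmxA idQ -ex; exact: Odot.
Qed.

Lemma cl3 n (Q : 'M[E]_n) x : Q *m Q = Q -> NQ Q x ->
  (forall y, NQ Q^T y -> O (dot x y)) -> Omx x.
Proof.
move=> idQ [z [hz ex]] H i j; rewrite (ord1 i).
have := H (delta_mx 0 j *m Q^T) (ex_intro _ _ (conj (Omx_delta j) erefl)).
by rewrite -dot_mulmx ex -mulmxA idQ -ex dot_delta.
Qed.

Lemma modlin_sum n (N : 'rV[E]_n -> Prop) (f : 'rV_n -> E) (I : Type) (r : seq I)
  (c : I -> E) (g : I -> 'rV_n) : N 0 ->
  (forall a y y', O a -> N y -> N y' -> N (a *: y + y')) ->
  (forall a y y', O a -> N y -> N y' -> O (f (a *: y + y') - (a * f y + f y'))) ->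
  (forall i, O (c i)) -> (forall i, N (g i)) ->
  N (\sum_(i <- r) c i *: g i) /\
  O (f (\sum_(i <- r) c i *: g i) - \sum_(i <- r) c i * f (g i)).
Proof.
move=> N0 Ncl lin cO gN; elim: r => [|i r [IH1 IH2]].
  rewrite !big_nil; split => //.
  have := lin 1 0 0 O1 N0 N0; rewrite scale1r addr0 mul1r subr0.
  have -> : f 0 - (f 0 + f 0) = - f 0 by ring.
  by move/ON; rewrite opprK.
rewrite !big_cons; split; first exact: Ncl.
have := lin (c i) (g i) _ (cO i) (gN i) IH1 => h.
set A := f _ in h *; set S := \sum_(j <- r) _.
have -> : A - (c i * f (g i) + S) =
  (A - (c i * f (g i) + f (\sum_(j <- r) c j *: g j))) + (f (\sum_(j <- r) c j *: g j) - S) by ring.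
exact: OD.
Qed.

Lemma diag_mul n (D : 'M[E]_n) (s : 'rV_n) j : diagm D -> (s *m D) 0 j = s 0 j * D j j.
Proof.
move=> hD; rewrite mxE (bigD1 j) //= big1 ?addr0 // => l hl.
by rewrite hD ?mulr0.
Qed.

Lemma latS n (Q : 'M[E]_n) (h : 'rV_n) :
  (forall z, Omx z -> Omx (z *m Q^T) -> O (dot z h)) ->
  exists t, Omx t /\ Omx (t *m Q - h).
Proof.
move=> H.
have [U [D [V [[hU [U' [hU' eU1 eU2]]] [hV [V' [hV' eV1 eV2]]] hD eQ]]]] := smith sO vO Q.
pose k := h *m V'.
have Hk : forall u, Omx u -> Omx (u *m D) -> O (dot u k).
  move=> u hu huD.
  have e1 : u *m V'^T *m Q^T = u *m D *m U^T.
    rewrite eQ !trmx_mul (diagm_tr hD) !mulmxA -(mulmxA u) -trmx_mul eV1 trmx1 mulmx1.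
    by [].
  have := H _ (Omx_mul hu (Omx_tr hV')); rewrite e1 => /(_ (Omx_mul huD (Omx_tr hU))).
  by rewrite dot_mulmx trmxK.
have rowD : forall i : 'I_n, Omx ((delta_mx 0 i : 'rV_n) *m D) <-> O (D i i).
  move=> i; split => [hh|hi]; first by move: (hh 0 i); rewrite -rowE mxE.
  move=> a b; rewrite (ord1 a) -rowE mxE.
  by case: (eqVneq i b) => [<-//|ne]; rewrite hD //; exact: O0.
have [sf hs] : exists sf : 'I_n -> E, forall i, O (sf i) /\ O (sf i * D i i - k 0 i).
  apply: (@fin_all_exists _ (fun _ => E) (fun i si => O si /\ O (si * D i i - k 0 i))) => i.
  have case0 : O (D i i) -> exists si, O si /\ O (si * D i i - k 0 i).
    move=> hi; exists 0; split; first exact: O0.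
    rewrite mul0r sub0r; apply: ON.
    have := Hk _ (Omx_delta i) (proj2 (rowD i) hi).
    by rewrite dotC dot_delta.
  case: (eqVneq (D i i) 0) => [h0|hn]; first by apply: case0; rewrite h0; exact: O0.
  case: (vO hn) => [hi|hinv]; first exact: case0.
  exists (k 0 i / D i i); split.
    have hu : Omx ((D i i)^-1 *: (delta_mx 0 i : 'rV_n) *m D).
      move=> a b; rewrite (ord1 a) -scalemxAl -rowE !mxE.
      case: (eqVneq i b) => [<-|ne]; first by rewrite mulVf //; exact: O1.
      by rewrite (hD i b ne) mulr0; exact: O0.
    have := Hk _ (Omx_scale hinv (Omx_delta i)) hu.
    by rewrite dotZl dotC dot_delta mulrC.
  by rewrite divfK // subrr; exact: O0.
pose s := \row_i sf i.
exists (s *m U'); split.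
  by apply: Omx_mul => // a b; rewrite mxE; exact: (proj1 (hs b)).
have -> : s *m U' *m Q - h = (s *m D - k) *m V.
  rewrite mulmxBl /k -(mulmxA h) eV2 mulmx1 eQ !mulmxA -(mulmxA s U') eU2 mulmx1.
  by [].
apply: Omx_mul => // a b; rewrite (ord1 a).
have -> : (s *m D - k) 0 b = (s *m D) 0 b - k 0 b by rewrite !mxE.
rewrite (diag_mul s b hD) /s mxE; exact: (proj2 (hs b)).
Qed.


Lemma NQ_cl n (Q : 'M[E]_n) a y y' : O a -> NQ Q y -> NQ Q y' -> NQ Q (a *: y + y').
Proof.
move=> ha [z [hz ->]] [z' [hz' ->]]; exists (a *: z + z'); split.
  by apply: Omx_add => //; apply: Omx_scale.
by rewrite mulmxDl scalemxAl.
Qed.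

Lemma NQ0 n (Q : 'M[E]_n) : NQ Q 0.
Proof. by exists 0; split; [exact: Omx0 | rewrite mul0mx]. Qed.

Lemma surjQ n (Q : 'M[E]_n) (f : 'rV_n -> E) : Q *m Q = Q ->
  (forall a y y', O a -> NQ Q^T y -> NQ Q^T y' -> O (f (a *: y + y') - (a * f y + f y'))) ->
  (forall y, NQ Q^T y -> Omx y -> O (f y)) ->
  exists x, NQ Q x /\ forall y, NQ Q^T y -> O (f y - dot x y).
Proof.
move=> idQ lin van.
pose h := \row_j f (delta_mx 0 j *m Q^T).
have cong : forall z, Omx z -> O (f (z *m Q^T) - dot z h).
  move=> z hz.
  have e1 : z *m Q^T = \sum_(i <- index_enum 'I_n) z 0 i *: (delta_mx 0 i *m Q^T).
    by rewrite mulmx_sum_row; apply: eq_bigr => i _; rewrite rowE.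
  have e2 : dot z h = \sum_(i <- index_enum 'I_n) z 0 i * f (delta_mx 0 i *m Q^T).
    by apply: eq_bigr => i _; rewrite mxE.
  rewrite e1 e2.
  have gN : forall i, NQ Q^T (delta_mx 0 i *m Q^T).
    by move=> i; exists (delta_mx 0 i); split => //; exact: Omx_delta.
  have := @modlin_sum n (NQ Q^T) f _ (index_enum 'I_n) (fun i => z 0 i)
    (fun i => delta_mx 0 i *m Q^T) (NQ0 _) (fun a y y' ha => @NQ_cl _ _ a y y' ha) lin
    (fun i => hz 0 i) gN.
  by case.
have [t [ht htQ]] : exists t, Omx t /\ Omx (t *m Q - h).
  apply: latS => z hz hzQ.
  have hf := van _ (ex_intro _ z (conj hz erefl)) hzQ.
  have -> : dot z h = f (z *m Q^T) - (f (z *m Q^T) - dot z h) by ring.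
  by apply: OB => //; exact: cong.
exists (t *m Q); split; first by exists t.
move=> y [z [hz ->]].
have e : dot (t *m Q) (z *m Q^T) = dot (t *m Q) z by rewrite -dot_mulmx -mulmxA idQ.
rewrite e.
have -> : f (z *m Q^T) - dot (t *m Q) z =
   (f (z *m Q^T) - dot z h) - dot z (t *m Q - h).
  by rewrite dotBr (dotC z (t *m Q)); ring.
by apply: OB; [exact: cong | exact: Odot].
Qed.


Lemma unit_entry n (Q : 'M[E]_n) (z : 'rV[E]_n) : Omx z -> z *m Q = z -> z != 0 ->
  (forall m, Omx m -> m *m Q = m -> exists a, O a /\ m = a *: z) ->
  exists j, z 0 j != 0 /\ O (z 0 j)^-1.
Proof.
move=> hz hzQ z0 gen.
have ex : exists j, z 0 j != 0.
  case: (boolP [exists j, z 0 j != 0]) => [/existsP//|].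
  rewrite negb_exists => /forallP h.
  case/eqP: z0; apply/matrixP => i j; rewrite (ord1 i) mxE.
  by move: (h j); rewrite negbK => /eqP.
have [j [hj hmin]] := @min_fin _ _ sO vO _ (fun j => z 0 j) ex.
exists j; split => //.
have hm : Omx ((z 0 j)^-1 *: z) by move=> a b; rewrite (ord1 a) mxE mulrC; exact: hmin.
have hmQ : ((z 0 j)^-1 *: z) *m Q = (z 0 j)^-1 *: z by rewrite -scalemxAl hzQ.
have [a [ha ea]] := gen _ hm hmQ.
have : ((z 0 j)^-1 - a) *: z = 0 by rewrite scalerBl ea subrr.
by move/eqP; rewrite scaler_eq0 (negbTE z0) orbF subr_eq0 => /eqP ->.
Qed.

Lemma fit_rank1 n (Q : 'M[E]_n) (z1 z2 : 'rV[E]_n) : Q *m Q = Q ->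
  Omx z1 -> z1 *m Q = z1 -> z1 != 0 ->
  (forall m, Omx m -> m *m Q = m -> exists a, O a /\ m = a *: z1) ->
  Omx z2 -> z2 *m Q^T = z2 -> z2 != 0 ->
  (forall m, Omx m -> m *m Q^T = m -> exists a, O a /\ m = a *: z2) ->
  forall x, FQ Q x <-> exists a, O a /\ x = a * dot z1 z2.
Proof.
move=> idQ hz1 ez1 nz1 gen1 hz2 ez2 nz2 gen2 x.
have [j1 [hj1 u1]] := unit_entry hz1 ez1 nz1 gen1.
have [j2 [hj2 u2]] := unit_entry hz2 ez2 nz2 gen2.
have idQt : Q^T *m Q^T = Q^T by rewrite -trmx_mul idQ.
have [rf hr] : exists rf : 'I_n -> E, forall i, row i Q^T = rf i *: z2.
  apply: (@fin_all_exists _ (fun _ => E) (fun i r => row i Q^T = r *: z2)) => i.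
  have [c [c0 hc]] := @scale_in _ _ sO vO _ (fun j => (row i Q^T) 0 j).
  have hm : Omx (c *: row i Q^T) by move=> a b; rewrite (ord1 a) mxE; exact: hc.
    have hmQ : (c *: row i Q^T) *m Q^T = c *: row i Q^T by rewrite -scalemxAl -row_mul idQt.
  have [a [ha ea]] := gen2 _ hm hmQ.
  exists (c^-1 * a).
  by rewrite -scalerA -ea scalerA mulVf // scale1r.
have eQ : forall k l, Q k l = rf l * z2 0 k.
  by move=> k l; have /matrixP/(_ 0 k) := hr l; rewrite !mxE => <-.
pose rv := \row_l rf l.
have ezQ : forall z, z *m Q = dot z z2 *: rv.
  move=> z; apply/matrixP => i l; rewrite (ord1 i) !mxE /dot mulr_suml.
  by apply: eq_bigr => k _; rewrite eQ; ring.
pose s := dot z1 z2.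
have es : z1 = s *: rv by rewrite -{1}ez1 ezQ.
have s0 : s != 0 by apply: contraNneq nz1 => h; rewrite es h scale0r.
pose g := s^-1 *: z1.
have eg : rv = g by rewrite /g es scalerA mulVf // scale1r.
have g0 : g != 0 by rewrite /g scaler_eq0 invr_eq0 negb_or s0 nz1.
have K1 : forall v, NQ Q v <-> exists b, O b /\ v = b *: g.
  move=> v; split.
    by move=> [z [hz ->]]; exists (dot z z2); split; [exact: Odot | rewrite ezQ eg].
  move=> [b [hb ->]]; exists ((b * (z2 0 j2)^-1) *: delta_mx 0 j2); split.
    by apply: Omx_scale; [exact: OM | exact: Omx_delta].
  by rewrite ezQ eg dotZl dotC dot_delta -mulrA mulVf // mulr1.
have K2 : forall b, Omx (b *: g) -> O (b / s).
  move=> b hb; have := OM (hb 0 j1) u1.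
  by rewrite /g !mxE mulrA mulfK.
split.
- case=> k [gg [gN gen [m [a [R [aO RO rel ->]]]]]].
  have [c hc] : exists c : 'I_k -> E, forall i, O (c i) /\ gg i = c i *: g.
    apply: (@fin_all_exists _ (fun _ => E) (fun i ci => O ci /\ gg i = ci *: g)) => i.
    by have [b [hb eb]] := (proj1 (K1 _)) (gN i); exists b.
  have [bt [btO ebt]] := gen g (proj2 (K1 g) (ex_intro _ 1 (conj O1 (esym (scale1r g))))).
  have sumb : \sum_i bt i * c i = 1.
    have e : g = (\sum_i bt i * c i) *: g.
      rewrite {1}ebt scaler_suml; apply: eq_bigr => i _; by rewrite (proj2 (hc i)) scalerA.
    move: e => /eqP; rewrite -subr_eq0 -{1}(scale1r g) -scalerBl scaler_eq0 (negbTE g0) orbF.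
    by rewrite subr_eq0 => /eqP <-.
  have detR : forall j, O (\det (R j) / s).
    move=> j; set Rj := R j.
    have hrow : forall i, O ((\sum_l Rj i l * c l) / s).
      move=> i; apply: K2.
      have := proj2 (rel j i).
      have -> : \sum_l R j i l *: gg l = (\sum_l Rj i l * c l) *: g.
        by rewrite scaler_suml; apply: eq_bigr => l _; rewrite (proj2 (hc l)) scalerA.
      done.
    pose cv := \col_l c l.
    pose u := s^-1 *: (Rj *m cv).
    have hu : Omx u.
      move=> a' b'; rewrite (ord1 b') !mxE mulrC.
      by under eq_bigr do rewrite mxE; exact: hrow.
    have eR : \det Rj *: cv = s *: (\adj Rj *m u).
      by rewrite /u -scalemxAr scalerA mulfV // scale1r mulmxA mul_adj_mx mul_scalar_mx.
    have ec : forall i, \det Rj * c i = s * (\adj Rj *m u) i 0.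
      by move=> i; have /matrixP/(_ i 0) := eR; rewrite !mxE.
    have -> : \det Rj / s = \sum_i bt i * (\adj Rj *m u) i 0.
      transitivity (\det Rj / s * \sum_i bt i * c i); first by rewrite sumb mulr1.
      rewrite mulr_sumr; apply: eq_bigr => i _.
      have -> : (\adj Rj *m u) i 0 = \det Rj * c i / s by rewrite ec [s * _]mulrC mulfK.
      by ring.
    apply: Osum => i _; apply: OM; first exact: btO.
    apply: Omx_mul => //; apply: Omx_adj => // a' b'; exact: RO.
  exists (\sum_j a j * (\det (R j) / s)); split.
    by apply: Osum => j _; apply: OM; [exact: aO | exact: detR].
  by rewrite mulr_suml; apply: eq_bigr => j _; rewrite -mulrA divfK.
- move=> [a [ha ->]].
  have hs : O s by exact: Odot.
  exists 1, (fun _ => g); split.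
  + by move=> _; apply/K1; exists 1; split; [exact: O1 | rewrite scale1r].
  + move=> v /K1 [b [hb ->]]; exists (fun _ => b); split => //; by rewrite big_ord1.
  + exists 1, (fun _ => a), (fun _ => (s%:M : 'M_1)); split => //.
    * move=> _ i l; rewrite mxE; case: (i == l); rewrite ?mulr1n ?mulr0n //; exact: O0.
    * move=> _ i; rewrite big_ord1 (ord1 i) mxE eqxx mulr1n /g scalerA mulfV // scale1r.
      by split; [exists z1; split | exact: hz1].
    * by rewrite big_ord1 det_scalar1.
Qed.

End Mx.


Section Gen.
Variables (E : fieldType) (O : E -> Prop).
Hypothesis sO : subring_of O.

Lemma OX w k : O w -> O (w ^+ k).
Proof.
move=> hw; elim: k => [|k IH]; first by rewrite expr0; exact: O1 sO.
by rewrite exprS; apply: (OM sO).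
Qed.

Lemma dvr_vO w : dvr_with_unif O w -> forall x : E, x != 0 -> O x \/ O x^-1.
Proof.
move=> [_ ff wO [w0 _] fact] x x0.
have [a [b [ha hb b0 ex]]] := ff x.
have a0 : a != 0 by apply: contraNneq x0 => a0; rewrite ex a0 mul0r.
have [u [m [[uO u0 uiO] ea]]] := fact a ha a0.
have [u' [k [[u'O u'0 u'iO] eb]]] := fact b hb b0.
have wk0 : forall j, w ^+ j != 0 by move=> j; rewrite expf_neq0.
case: (leqP k m) => hkm.
  left; have -> : x = u * u'^-1 * w ^+ (m - k).
    rewrite ex ea eb -{1}(subnKC hkm) exprD.
    by field; rewrite ?wk0 ?u'0.
  by apply: (OM sO); [apply: (OM sO) | exact: OX].
right; have -> : x^-1 = u' * u^-1 * w ^+ (k - m).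
  rewrite ex ea eb -{1}(subnKC (ltnW hkm)) exprD.
  by field; rewrite ?wk0 ?u0 ?u'0.
by apply: (OM sO); [apply: (OM sO) | exact: OX].
Qed.

Variables (A : comAlgType E) (V : lmodType A).
Local Notation es := (@escale E A V).

Lemma esD c (x y : V) : es c (x + y) = es c x + es c y.
Proof. by rewrite /escale scalerDr. Qed.
Lemma esDl c d (x : V) : es (c + d) x = es c x + es d x.
Proof. by rewrite /escale scalerDl scalerDl. Qed.
Lemma es0 (x : V) : es 0 x = 0.
Proof. by rewrite /escale scale0r scale0r. Qed.
Lemma es0v c : es c (0 : V) = 0.
Proof. by rewrite /escale scaler0. Qed.
Lemma es1 (x : V) : es 1 x = x.
Proof. by rewrite /escale scale1r scale1r. Qed.
Lemma esA c d (x : V) : es c (es d x) = es (c * d) x.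
Proof. by rewrite /escale scalerA mulr_algl scalerA. Qed.
Lemma esN c (x : V) : es c (- x) = - es c x.
Proof. by rewrite /escale scalerN. Qed.
Lemma esNl c (x : V) : es (- c) x = - es c x.
Proof. by rewrite /escale scaleNr scaleNr. Qed.
Lemma es_act (t : A) c (x : V) : t *: es c x = es c (t *: x).
Proof. by rewrite /escale !scalerA mulrC. Qed.
Lemma es_inj c (x : V) : c != 0 -> es c x = 0 -> x = 0.
Proof. by move=> c0 h; rewrite -(es1 x) -(mulVf c0) -esA h es0v. Qed.

Definition phi n (b : 'I_n -> V) (z : 'rV[E]_n) := \sum_i es (z 0 i) (b i).

Lemma phiD n (b : 'I_n -> V) x y : phi b (x + y) = phi b x + phi b y.
Proof. by rewrite /phi -big_split; apply: eq_bigr => i _; rewrite mxE esDl. Qed.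
Lemma phiZ n (b : 'I_n -> V) c x : phi b (c *: x) = es c (phi b x).
Proof.
rewrite /phi (big_morph (es c) (esD c) (es0v c)); apply: eq_bigr => i _.
by rewrite mxE esA.
Qed.
Lemma phi0 n (b : 'I_n -> V) : phi b 0 = 0.
Proof. by rewrite -(scale0r 0) phiZ es0. Qed.
Lemma phiB n (b : 'I_n -> V) x y : phi b (x - y) = phi b x - phi b y.
Proof. by rewrite phiD -[- y]scaleN1r phiZ esNl es1. Qed.
Lemma phi_sum n (b : 'I_n -> V) (I : Type) (r : seq I) (c : I -> E) (z : I -> 'rV_n) :
  phi b (\sum_(i <- r) c i *: z i) = \sum_(i <- r) es (c i) (phi b (z i)).
Proof.
rewrite (big_morph (phi b) (phiD b) (phi0 b)); apply: eq_bigr => i _; exact: phiZ.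
Qed.
Lemma phi_act n (b : 'I_n -> V) t z : t *: phi b z = \sum_i es (z 0 i) (t *: b i).
Proof. by rewrite /phi scaler_sumr; apply: eq_bigr => i _; rewrite es_act. Qed.
Lemma phi_delta n (b : 'I_n -> V) j : phi b (delta_mx 0 j) = b j.
Proof.
rewrite /phi (bigD1 j) //= big1 ?addr0; first by rewrite mxE !eqxx es1.
by move=> i hi; rewrite mxE (negbTE hi) andbF es0.
Qed.

Lemma lat_coord (L : V -> Prop) : is_lattice O es L ->
  exists n (b : 'I_n -> V), [/\ injective (phi b), (forall v, exists z, v = phi b z)
     & forall v, L v <-> exists z, Omx O z /\ v = phi b z].
Proof.
move=> [n [b [span ind lat]]]; exists n, b; split.
- move=> x y e; apply/matrixP => i j; rewrite (ord1 i); apply/eqP; rewrite -subr_eq0; apply/eqP.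
  have := ind (fun k => x 0 k - y 0 k).
  have -> : \sum_i es (x 0 i - y 0 i) (b i) = phi b (x - y).
    by apply: eq_bigr => k _; rewrite mxE mxE.
  by rewrite phiB e subrr => /(_ erefl j).
- move=> v; have [c ->] := span v; exists (\row_i c i).
  by apply: eq_bigr => i _; rewrite mxE.
- move=> v; split.
    move=> hv; have [c ec] := span v; exists (\row_i c i); split.
      by move=> i j; rewrite mxE; apply: (proj1 (lat c)); rewrite -ec.
    by rewrite ec; apply: eq_bigr => i _; rewrite mxE.
  by move=> [z [hz ->]]; apply: (proj2 (lat (fun i => z 0 i))) => i; exact: hz.
Qed.

End Gen.

Section Pair.
Variables (E : fieldType) (A1 A2 : comAlgType E) (V1 : lmodType A1) (V2 : lmodType A2).
Variable pr : V1 -> V2 -> E.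
Hypothesis bil : ebilinear pr.

Lemma pr0l w : pr 0 w = 0.
Proof.
have := (proj1 bil) 1 0 0 w; rewrite es1 addr0 mul1r => h.
by apply: (addrI (pr 0 w)); rewrite -h addr0.
Qed.
Lemma pr0r v : pr v 0 = 0.
Proof.
have := (proj2 bil) 1 v 0 0; rewrite es1 addr0 mul1r => h.
by apply: (addrI (pr v 0)); rewrite -h addr0.
Qed.
Lemma prDl v v' w : pr (v + v') w = pr v w + pr v' w.
Proof. by have := (proj1 bil) 1 v v' w; rewrite es1 mul1r. Qed.
Lemma prDr v w w' : pr v (w + w') = pr v w + pr v w'.
Proof. by have := (proj2 bil) 1 v w w'; rewrite es1 mul1r. Qed.
Lemma prZl c v w : pr (escale c v) w = c * pr v w.
Proof. by have := (proj1 bil) c v 0 w; rewrite addr0 pr0l addr0. Qed.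
Lemma prZr c v w : pr v (escale c w) = c * pr v w.
Proof. by have := (proj2 bil) c v w 0; rewrite addr0 pr0r addr0. Qed.
Lemma prNr v w : pr v (- w) = - pr v w.
Proof. by have := prZr (-1) v w; rewrite esNl es1 mulN1r. Qed.
Lemma prBr v w w' : pr v (w - w') = pr v w - pr v w'.
Proof. by rewrite prDr prNr. Qed.

Lemma pr_suml (I : Type) (r : seq I) (c : I -> E) (g : I -> V1) w :
  pr (\sum_(i <- r) escale (c i) (g i)) w = \sum_(i <- r) c i * pr (g i) w.
Proof.
elim: r => [|i r IH]; first by rewrite !big_nil pr0l.
by rewrite !big_cons prDl prZl IH.
Qed.
Lemma pr_sumr (I : Type) (r : seq I) (c : I -> E) (g : I -> V2) v :
  pr v (\sum_(i <- r) escale (c i) (g i)) = \sum_(i <- r) c i * pr v (g i).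
Proof.
elim: r => [|i r IH]; first by rewrite !big_nil pr0r.
by rewrite !big_cons prDr prZr IH.
Qed.

End Pair.

Section MkerS.
Variables (E : fieldType) (O : E -> Prop).
Hypothesis sO : subring_of O.
Hypothesis vO : forall x : E, x != 0 -> O x \/ O x^-1.

Lemma Mker_char (A : comAlgType E) (T : A -> Prop) (lam : {rmorphism A -> E}) e
  (V : lmodType A) (M : V -> Prop) :
  red_fflat_local_order O T -> alg_char O T lam -> lambda_idem lam e ->
  forall v, Mker T lam M v <-> M v /\ e *: v = v.
Proof.
move=> [latT _ _ _ _] [lamZ _] [_ lame ech] v; split.
- move=> [hM ht]; split => //.
  have [k [bt [spanT _ latTT]]] := latT.
  have [c ec] := spanT (1 - e).
  have [dd [dd0 hdd]] := @scale_in _ _ sO vO _ c.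
  have Tt : T (dd *: (1 - e)).
    have -> : dd *: (1 - e) = \sum_i (dd * c i) *: bt i.
      by rewrite ec scaler_sumr; apply: eq_bigr => i _; rewrite scalerA.
    by apply/latTT.
  have lt : lam (dd *: (1 - e)) = 0 by rewrite lamZ rmorphB rmorph1 lame subrr mulr0.
  have := ht _ Tt lt; rewrite -mulr_algl -scalerA => h.
  have := es_inj dd0 h; rewrite scalerBl scale1r => /eqP; rewrite subr_eq0 => /eqP.
  by move=> <-.
- move=> [hM he]; split => // t Tt lt.
  by rewrite -he scalerA ech lt scale0r scale0r.
Qed.

End MkerS.


Unset Implicit Arguments. Set Strict Implicit. Set Printing Implicit Defensive.

Theorem mainTheorem10
  (E : fieldType) (O : E -> Prop) (w : E)
  (A1 A2 : comAlgType E) (T1 : A1 -> Prop) (T2 : A2 -> Prop)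
  (lam1 : {rmorphism A1 -> E}) (lam2 : {rmorphism A2 -> E})
  (e1 : A1) (e2 : A2)
  (V1 : lmodType A1) (V2 : lmodType A2) (M1 : V1 -> Prop) (M2 : V2 -> Prop)
  (pr : V1 -> V2 -> E) :
  complete_dvr O w ->
  red_fflat_local_order O T1 -> red_fflat_local_order O T2 ->
  alg_char O T1 lam1 -> alg_char O T2 lam2 ->
  lambda_idem lam1 e1 -> lambda_idem lam2 e2 ->
  Tlattice O T1 M1 -> Tlattice O T2 M2 ->
  ebilinear pr -> perfect_pairing O pr M1 M2 ->
  (forall m1 m2, M1 m1 -> M2 m2 -> pr (e1 *: m1) ((1 - e2) *: m2) = 0) ->
  (forall m1 m2, M1 m1 -> M2 m2 -> pr ((1 - e1) *: m1) (e2 *: m2) = 0) ->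
  (* (a) *)
  (induced_perfect_EmodO O pr (eM e1 M1) M1 (eM e2 M2) M2 /\
   (forall x, eta_lambda O e1 M1 x <-> eta_lambda O e2 M2 x)) /\
  (* (b) *)
  (forall d1 d2,
     free_rank1 O (@escale _ _ V1) (Mker T1 lam1 M1) d1 ->
     free_rank1 O (@escale _ _ V2) (Mker T2 lam2 M2) d2 ->
     (forall x, eta_lambda O e1 M1 x <-> eta_lambda O e2 M2 x) /\
     (forall x, eta_lambda O e1 M1 x <-> exists a, O a /\ x = a * pr d1 d2)).
Proof.
move=> [dvr _] hT1 hT2 hc1 hc2 hl1 hl2 [latM1 _] [latM2 _] bil [pO pS1 pN1 pS2 pN2] orth1 orth2.
have sO : subring_of O by case: dvr.
have vO : forall x : E, x != 0 -> O x \/ O x^-1 := dvr_vO sO dvr.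
have [n [b1 [inj1 sur1 lat1]]] := lat_coord latM1.
have [n2 [b2 [inj2' sur2' lat2']]] := lat_coord latM2.
pose coordP := fun v : V1 => constructive_indefinite_description _ (sur1 v).
pose coord := fun v => proj1_sig (coordP v).
have ecoord : forall v, v = phi b1 (coord v) := fun v => proj2_sig (coordP v).
have coord_phi : forall z, coord (phi b1 z) = z := fun z => inj1 _ _ (esym (ecoord _)).
have hM1 : forall z, M1 (phi b1 z) <-> Omx O z.
  move=> z; rewrite lat1; split; last by move=> h; exists z.
  by move=> [z' [hz' /inj1 ->]].
have M1b : forall j, M1 (b1 j).
  move=> j; rewrite -phi_delta; apply/hM1; apply: (Omx_delta sO).
have [bd hbd] : exists bd : 'I_n -> V2, forall i,
    M2 (bd i) /\ forall x, M1 x -> coord x 0 i = pr x (bd i).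
  apply: (@fin_all_exists _ (fun _ => V2)
    (fun i y => M2 y /\ forall x, M1 x -> coord x 0 i = pr x y)) => i.
  apply: (pS2 (fun v => coord v 0 i)).
  - move=> a x x' ha hx hx'.
    have -> : coord (escale a x + x') = a *: coord x + coord x'.
      by apply: inj1; rewrite -ecoord phiD phiZ -!ecoord.
    by rewrite !mxE.
  - by move=> x; rewrite lat1 => -[z [hz ->]]; rewrite coord_phi; exact: hz.
have cb : forall j, coord (b1 j) = delta_mx 0 j.
  by move=> j; rewrite -{1}(phi_delta b1 j) coord_phi.
have prb : forall i j, pr (b1 i) (bd j) = (delta_mx 0 i : 'rV[E]_n) 0 j.
  by move=> i j; rewrite -(proj2 (hbd j) _ (M1b i)) cb.
have pr12 : forall x y, pr (phi b1 x) (phi bd y) = dot x y.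
  move=> x y; rewrite /phi (pr_suml bil); apply: eq_bigr => i _.
  rewrite (pr_sumr bil) (bigD1 i) //= big1 ?addr0; first by rewrite prb mxE !eqxx mulr1.
  by move=> j hj; rewrite prb mxE (negbTE hj) andbF mulr0.
have inj2 : injective (phi bd).
  move=> y y' e; apply/matrixP => i j; rewrite (ord1 i).
  have := pr12 (delta_mx 0 j) y; rewrite e pr12.
  by rewrite (dotC _ y') (dotC _ y) !dot_delta => ->.
have M2cl : forall a x y, O a -> M2 x -> M2 y -> M2 (escale a x + y).
  move=> a x y ha; rewrite !lat2' => -[z [hz ->]] [z' [hz' ->]].
  exists (a *: z + z'); split; last by rewrite phiD phiZ.
  by apply: (Omx_add sO) => //; apply: (Omx_scale sO).
have M20 : M2 0 by rewrite lat2'; exists 0; split; [apply: (Omx0 sO) | by rewrite phi0].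
have M2phi : forall z, Omx O z -> M2 (phi bd z).
  move=> z hz; rewrite /phi; apply: (big_ind M2) => //.
    by move=> x y hx hy; have := M2cl 1 x y (O1 sO) hx hy; rewrite es1.
  move=> i _; have := M2cl (z 0 i) (bd i) 0 (hz 0 i) (proj1 (hbd i)) M20.
  by rewrite addr0.
have allM2 : forall v, M2 v -> exists z, Omx O z /\ v = phi bd z.
  move=> v hv; pose z := \row_i pr (b1 i) v.
  have hz : Omx O z by move=> a b; rewrite mxE; apply: pO => //; exact: M1b.
  exists z; split => //; apply/eqP; rewrite -subr_eq0; apply/eqP; apply: pN2.
    have : M2 (escale (-1) (phi bd z) + v).
      by apply: M2cl => //; [apply: (ON sO); exact: (O1 sO) | exact: M2phi].
    by rewrite esNl es1 addrC.
  move=> x; rewrite lat1 => -[t [ht ->]]; rewrite (prBr bil) pr12.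
  rewrite {1}/phi (pr_suml bil) /dot; apply/eqP; rewrite subr_eq0; apply/eqP.
  by apply: eq_bigr => i _; rewrite mxE.
have hM2 : forall z, M2 (phi bd z) <-> Omx O z.
  move=> z; split; last exact: M2phi.
  by move=> /allM2 [z' [hz' /inj2 ->]].
have sur2 : forall v, exists z, v = phi bd z.
  move=> v; have [c ->] := sur2' v.
  have [zz hzz] : exists zz : 'I_n2 -> 'rV_n, forall j, b2 j = phi bd (zz j).
    apply: (@fin_all_exists _ (fun _ => 'rV[E]_n) (fun j z => b2 j = phi bd z)) => j.
    have hb2 : M2 (b2 j).
      by apply/lat2'; exists (delta_mx 0 j); split; [apply: (Omx_delta sO) | by rewrite phi_delta].
    by have [z [_ ez]] := allM2 _ hb2; exists z.
  exists (\sum_j c 0 j *: zz j); rewrite phi_sum {1}/phi; apply: eq_bigr => j _.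
  by rewrite hzz.
pose Q : 'M[E]_n := \matrix_i coord (e1 *: b1 i).
have eQ1 : forall z, e1 *: phi b1 z = phi b1 (z *m Q).
  move=> z; rewrite phi_act mulmx_sum_row phi_sum; apply: eq_bigr => i _.
  by rewrite rowK -ecoord.
have [e1i _ _] := hl1.
have idQ : Q *m Q = Q.
  have h : forall z : 'rV[E]_n, z *m Q *m Q = z *m Q.
    by move=> z; apply: inj1; rewrite -!eQ1 scalerA e1i.
  by apply/row_matrixP => i; rewrite !rowE mulmxA h.
have idQt : Q^T *m Q^T = Q^T by rewrite -trmx_mul idQ.
have orthV : forall v ww, pr (e1 *: v) ((1 - e2) *: ww) = 0.
  move=> v ww; have [x ->] := sur1 v; have [y ->] := sur2 ww.
  rewrite !phi_act (pr_suml bil); apply: big1 => i _.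
  rewrite (pr_sumr bil) big1 ?mulr0 // => j _.
  by rewrite orth1 ?mulr0 //; exact: (proj1 (hbd j)).
have orthV2 : forall v ww, pr ((1 - e1) *: v) (e2 *: ww) = 0.
  move=> v ww; have [x ->] := sur1 v; have [y ->] := sur2 ww.
  rewrite !phi_act (pr_suml bil); apply: big1 => i _.
  rewrite (pr_sumr bil) big1 ?mulr0 // => j _.
  by rewrite orth2 ?mulr0 //; exact: (proj1 (hbd j)).
have pr_e : forall v ww, pr v (e2 *: ww) = pr (e1 *: v) ww.
  move=> v ww.
  have sv : v = e1 *: v + (1 - e1) *: v by rewrite scalerBl scale1r addrC subrK.
  have sw : ww = e2 *: ww + (1 - e2) *: ww by rewrite scalerBl scale1r addrC subrK.
  rewrite {1}sv (prDl bil) orthV2 addr0 {2}sw (prDr bil) orthV addr0.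
  done.
have eQ2 : forall y, e2 *: phi bd y = phi bd (y *m Q^T).
  move=> y; have [u eu] := sur2 (e2 *: phi bd y); rewrite eu; congr (phi bd).
  apply/matrixP => i j; rewrite (ord1 i).
  have := pr12 (delta_mx 0 j) u; rewrite -eu pr_e eQ1 pr12 dot_mulmx.
  by rewrite (dotC _ u) (dotC _ (y *m Q^T)) !dot_delta => ->.
have heM1 : forall z, eM e1 M1 (phi b1 z) <-> NQ O Q z.
  move=> z; split.
  - move=> [m [hm ez]]; move: hm; rewrite lat1 => -[z' [hz' em]]; exists z'; split => //.
    by apply: inj1; rewrite ez em eQ1.
  - by move=> [z' [hz' ->]]; exists (phi b1 z'); split; [apply/hM1 | rewrite eQ1].
have heM2 : forall z, eM e2 M2 (phi bd z) <-> NQ O Q^T z.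
  move=> z; split.
  - move=> [m [hm ez]]; have [z' [hz' em]] := allM2 _ hm; exists z'; split => //.
    by apply: inj2; rewrite ez em eQ2.
  - by move=> [z' [hz' ->]]; exists (phi bd z'); split; [apply/hM2 | rewrite eQ2].
have eta1E : forall x, eta_lambda O e1 M1 x <-> FQ O Q x.
  move=> x; rewrite /eta_lambda /FQ; symmetry.
  apply: (@fit_iso _ O _ _ _ _ (phi b1)).
  - exact: phiD.
  - by move=> c z; rewrite phiZ.
  - exact: inj1.
  - by move=> v' _; exact: sur1 v'.
  - by move=> v; rewrite heM1.
  - by move=> v; rewrite /NQ' heM1 hM1.
have eta2E : forall x, eta_lambda O e2 M2 x <-> FQ O Q^T x.
  move=> x; rewrite /eta_lambda /FQ; symmetry.
  apply: (@fit_iso _ O _ _ _ _ (phi bd)).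
  - exact: phiD.
  - by move=> c z; rewrite phiZ.
  - exact: inj2.
  - by move=> v' _; exact: sur2 v'.
  - by move=> v; rewrite heM2.
  - by move=> v; rewrite /NQ' heM2 hM2.
have etaEq : forall x, eta_lambda O e1 M1 x <-> eta_lambda O e2 M2 x.
  by move=> x; rewrite eta1E eta2E (FQ_tr sO vO).
split; first split => //.
  split.
  - move=> x y hx hxM hy; have [a ea] := sur1 x; have [b eb] := sur2 y; subst x y.
    rewrite pr12; apply: (cl1 sO idQ); [apply/heM1 | apply/hM1 | apply/heM2] => //.
  - move=> x y hx hy hyM; have [a ea] := sur1 x; have [b eb] := sur2 y; subst x y.
    rewrite pr12 dotC; apply: (cl1 sO idQt); [apply/heM2 | apply/hM2 | rewrite trmxK; apply/heM1] => //.
  - move=> x hx H; have [a ea] := sur1 x; subst x.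
    apply/hM1; apply: (cl3 sO idQ); first by apply/heM1.
    by move=> y hy; have := H (phi bd y) (proj2 (heM2 y) hy); rewrite pr12.
  - move=> y hy H; have [b eb] := sur2 y; subst y.
    apply/hM2; apply: (cl3 sO idQt); first by apply/heM2.
    move=> x; rewrite trmxK => hx.
    by have := H (phi b1 x) (proj2 (heM1 x) hx); rewrite pr12 dotC.
  - split.
    + move=> f hlin hvan.
      have [x [hx H]] : exists x, NQ O Q x /\
          forall y, NQ O Q^T y -> O (f (phi bd y) - dot x y).
        apply: (@surjQ _ _ sO vO _ Q (fun z => f (phi bd z)) idQ).
        * move=> a y y' ha hy hy'; rewrite /= phiD phiZ; apply: hlin => //; by apply/heM2.
        * by move=> y hy hyO; apply: hvan; [apply/heM2 | apply/hM2].
      exists (phi b1 x); split; first by apply/heM1.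
      move=> y hy; have [b eb] := sur2 y; subst y; rewrite pr12; apply: H; by apply/heM2.
    + move=> f hlin hvan.
      have [x [hx H]] : exists x, NQ O Q^T x /\
          forall y, NQ O Q y -> O (f (phi b1 y) - dot x y).
        have := @surjQ _ _ sO vO _ Q^T (fun z => f (phi b1 z)) idQt; rewrite trmxK; apply.
        * move=> a y y' ha hy hy'; rewrite /= phiD phiZ; apply: hlin => //; by apply/heM1.
        * by move=> y hy hyO; apply: hvan; [apply/heM1 | apply/hM1].
      exists (phi bd x); split; first by apply/heM2.
      move=> y hy; have [a ea] := sur1 y; subst y; rewrite pr12 dotC; apply: H; by apply/heM1.
move=> d1 d2 [d1K d1tf d1gen] [d2K d2tf d2gen].
have MK1 := Mker_char sO vO M1 hT1 hc1 hl1.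
have MK2 := Mker_char sO vO M2 hT2 hc2 hl2.
have [z1 ez1] := sur1 d1; have [z2 ez2] := sur2 d2; subst d1 d2.
move: (d1K) => /MK1 [/hM1 hz1 he1]; rewrite eQ1 in he1; have fz1 := inj1 _ _ he1.
move: (d2K) => /MK2 [/hM2 hz2 he2]; rewrite eQ2 in he2; have fz2 := inj2 _ _ he2.
have nz1 : z1 != 0.
  apply/eqP => h0; have := d1tf 1 (O1 sO); rewrite h0 phi0 es0v => /(_ erefl).
  by apply/eqP; exact: oner_neq0.
have nz2 : z2 != 0.
  apply/eqP => h0; have := d2tf 1 (O1 sO); rewrite h0 phi0 es0v => /(_ erefl).
  by apply/eqP; exact: oner_neq0.
have gen1 : forall m, Omx O m -> m *m Q = m -> exists a, O a /\ m = a *: z1.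
  move=> m hm hmQ.
  have : Mker T1 lam1 M1 (phi b1 m) by apply/MK1; split; [apply/hM1 | rewrite eQ1 hmQ].
  move/d1gen => [a [ha ea]]; exists a; split => //; apply: inj1; by rewrite ea phiZ.
have gen2 : forall m, Omx O m -> m *m Q^T = m -> exists a, O a /\ m = a *: z2.
  move=> m hm hmQ.
  have : Mker T2 lam2 M2 (phi bd m) by apply/MK2; split; [apply/hM2 | rewrite eQ2 hmQ].
  move/d2gen => [a [ha ea]]; exists a; split => //; apply: inj2; by rewrite ea phiZ.
have R1 := fit_rank1 sO vO idQ hz1 fz1 nz1 gen1 hz2 fz2 nz2 gen2.
split => x; first exact: etaEq.
by rewrite eta1E R1 pr12.
Qed.
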